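(* Let $A$, $B$, $C$ be commutative associative unital algebras over $\mathbb{C}$ or $\mathbb{R}$. If $\mathbf{g}\colon A\to B$ is an $m$-homomorphism and $\mathbf{f}\colon B\to C$ is an $n$-homomorphism, then $\mathbf{f}\circ\mathbf{g}\colon A\to C$ is an $nm$-homomorphism.
   Context: For a linear map $\mathbf{f}\colon A\to B$, its characteristic function is the formal power series $R(\mathbf{f},a,z)=\exp\bigl(\mathbf{f}(\ln(1+az))\bigr)\in B[[z]]$, where $\ln(1+az)=\sum_{k\ge1}(-1)^{k-1}a^kz^k/k$ and $\mathbf{f}$ is applied coefficientwise. For an integer $n\ge0$, a linear map $\mathbf{f}$ is an $n$-homomorphism if $\mathbf{f}(1)=n$ and $R(\mathbf{f},a,z)$ is a polynomial in $z$ of degree at most $n$ for every $a$ in its domain. *)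

(* Defs.v *)
From HB Require Import structures.
From mathcomp Require Import all_boot all_order all_algebra.
From mathcomp Require Import reals.
From mathcomp.real_closed Require Import complex.
Set Implicit Arguments. Unset Strict Implicit. Unset Printing Implicit Defensive.
Import Order.TTheory GRing.Theory Num.Theory.
Local Open Scope ring_scope.

(* Formal power series over a ring B are represented by their coefficient
   sequences  nat -> B  (coefficient of z^k at index k). *)

Definition mulps (B : pzRingType) (s t : nat -> B) : nat -> B :=
  fun k => \sum_(i < k.+1) s i * t (k - i)%N.

Fixpoint powps (B : pzRingType) (s : nat -> B) (j : nat) : nat -> B :=
  match j with
  | 0 => fun k => if k == 0%N then 1 else 0
  | j'.+1 => mulps s (powps s j')
  end.

(* ln(1 + a z) = sum_{k>=1} (-1)^(k-1) a^k z^k / k *)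
Definition lnps (K : fieldType) (A : comAlgType K) (a : A) : nat -> A :=
  fun k => if k == 0%N then 0
           else (((-1) ^+ k.-1 / k%:R : K) *: a ^+ k).

(* exp(s) = sum_j s^j / j!  for a series s with zero constant term; the
   coefficient of z^k only receives contributions from j <= k. *)
Definition expps (K : fieldType) (B : comAlgType K) (s : nat -> B) : nat -> B :=
  fun k => \sum_(j < k.+1) ((j`!)%:R : K)^-1 *: powps s j k.

Definition charfun (K : fieldType) (A B : comAlgType K) (f : A -> B) (a : A)
  : nat -> B := expps (fun k => f (lnps a k)).

Definition nhom (K : fieldType) (A B : comAlgType K) (n : nat) (f : A -> B)
  : Prop :=
  linear f /\ f 1 = n%:R /\
  forall (a : A) (k : nat), (n < k)%N -> charfun f a k = 0.

(* Main.v *)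
Require Import Defs.
From HB Require Import structures.
From mathcomp Require Import all_boot all_order all_algebra.
From mathcomp Require Import reals.
From mathcomp.real_closed Require Import complex.
From mathcomp Require Import ring zify.
Import Order.TTheory GRing.Theory Num.Theory.
Local Open Scope ring_scope.

Definition trs {S : nzSemiRingType} (M : nat) (s : nat -> S) : {poly S} :=
  \poly_(i < M) s i.

Definition cong {S : nzSemiRingType} (M : nat) (p q : {poly S}) :=
  forall i, (i < M)%N -> p`_i = q`_i.

Definition ExpG {S : comNzRingType} (u : nat -> S) (M : nat) (x : S) : S :=
  \sum_(j < M) u j * x ^+ j.

Section Generic.
Context {S : comNzRingType}.
Implicit Types p q : {poly S}.

Lemma cong_refl {M p} : cong M p p. Proof. by []. Qed.
Lemma cong_sym {M p q} : cong M p q -> cong M q p.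
Proof. by move=> h i hi; rewrite h. Qed.
Lemma cong_trans {M p q r} : cong M p q -> cong M q r -> cong M p r.
Proof. by move=> h1 h2 i hi; rewrite h1 ?h2. Qed.
Lemma cong_add {M p p' q q'} : cong M p p' -> cong M q q' -> cong M (p + q) (p' + q').
Proof. by move=> h1 h2 i hi; rewrite !coefD h1 ?h2. Qed.
Lemma cong_opp {M p p'} : cong M p p' -> cong M (- p) (- p').
Proof. by move=> h1 i hi; rewrite !coefN h1. Qed.
Lemma cong_mul {M p p' q q'} : cong M p p' -> cong M q q' -> cong M (p * q) (p' * q').
Proof.
move=> h1 h2 i hi; rewrite !coefM; apply: eq_bigr => [[j hj]] _ /=.
rewrite h1 ?h2 //; lia.
Qed.
Lemma cong_exp {M p p'} k : cong M p p' -> cong M (p ^+ k) (p' ^+ k).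
Proof.
move=> h; elim: k => [|k IH]; first by rewrite !expr0.
by rewrite !exprS; apply: cong_mul h IH.
Qed.
Lemma cong_ExpG {M} N u {p p'} : cong M p p' -> cong M (ExpG u N p) (ExpG u N p').
Proof.
move=> h i hi; rewrite /ExpG !coef_sum; apply: eq_bigr => j _.
exact: (cong_mul cong_refl (cong_exp j h) i hi).
Qed.

Lemma X_factor p : p`_0 = 0 -> p = drop_poly 1 p * 'X.
Proof.
move=> h0; rewrite -{1}(poly_take_drop 1 p) expr1.
suff -> : take_poly 1 p = 0 by rewrite add0r.
apply/polyP => i; rewrite coef_take_poly coef0; case: i => [|i] //=.
Qed.

Lemma cong0_pow {p} k : p`_0 = 0 -> cong k (p ^+ k) 0.
Proof.
move=> /X_factor ->; move=> i hi; rewrite exprMn coefMXn hi coef0 //.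
Qed.

Lemma cong_drop M p : cong M p 0 -> p = drop_poly M p * 'X^M.
Proof.
move=> h; rewrite -{1}(poly_take_drop M p).
suff -> : take_poly M p = 0 by rewrite add0r.
apply/polyP => i; rewrite coef_take_poly coef0; case: ifP => // /h ->; by rewrite coef0.
Qed.

Lemma mulps_tr M (s t : nat -> S) k : (k < M)%N ->
  mulps s t k = (trs M s * trs M t)`_k.
Proof.
move=> hk; rewrite coefM /mulps; apply: eq_bigr => [[i hi]] _ /=.
rewrite !coef_poly; have -> : (i < M)%N by lia.
by have -> : (k - i < M)%N by lia.
Qed.

Lemma powps_tr M (s : nat -> S) j k : (k < M)%N ->
  powps s j k = (trs M s ^+ j)`_k.
Proof.
elim: j k => [|j IH] k hk /=.
  by rewrite expr0 coef1; case: (k == 0%N).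
rewrite exprS (mulps_tr M s _ k hk) coefM coefM; apply: eq_bigr => [[i hi]] _ /=.
rewrite -IH //; last by lia.
rewrite /trs coef_poly.
by rewrite coef_poly (_ : (k - i < M)%N = true) //; lia.
Qed.

Lemma rmorph_ExpG (S' : comNzRingType) (phi : {rmorphism S -> S'}) u M x :
  phi (ExpG u M x) = ExpG (fun j => phi (u j)) M (phi x).
Proof.
by rewrite /ExpG rmorph_sum; apply: eq_bigr => j _; rewrite rmorphM rmorphXn.
Qed.

Lemma tele (y : S) M :
  (1 + y) * \sum_(i < M.+1) (if i == 0%N :> nat then 0 else (-1) ^+ i.-1 * y ^+ i.-1)
  = 1 - (-1) ^+ M * y ^+ M.
Proof.
elim: M => [|M IH]; first by rewrite big_ord1 /= mulr0 !expr0 mul1r subrr.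
rewrite big_ord_recr /= mulrDr IH !exprS; ring.
Qed.

End Generic.

Section KPart.
Variable K : numFieldType.

Definition kE (j : nat) : K := ((j`!)%:R)^-1.
Definition kL (i : nat) : K := if i == 0%N then 0 else (-1) ^+ i.-1 / i%:R.

Lemma lnpsE (A : comAlgType K) (a : A) k : lnps a k = kL k *: a ^+ k.
Proof. by rewrite /lnps /kL; case: (k == 0%N) => //; rewrite scale0r. Qed.

Definition uE (B : comAlgType K) (j : nat) : {poly B} := ((kE j)%:A)%:P.
Definition vL (B : comAlgType K) (j : nat) : {poly B} := ((kL j)%:A)%:P.

Lemma expps0 (B : comAlgType K) (s : nat -> B) : expps s 0 = 1.
Proof. by rewrite /expps big_ord1 /= fact0 invr1 scale1r. Qed.

Lemma expps_tr (B : comAlgType K) M (s : nat -> B) k : s 0%N = 0 -> (k < M)%N ->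
  expps s k = (ExpG (uE B) M (trs M s))`_k.
Proof.
move=> s0 hk; rewrite /expps /ExpG coef_sum.
have c0 : (trs M s)`_0 = 0 by rewrite coef_poly; case: (0 < M)%N.
rewrite (big_ord_widen M (fun j => ((j`!)%:R : K)^-1 *: powps s j k)) //.
rewrite big_mkcond; apply: eq_bigr => [[j hj]] _ /=.
rewrite /uE coefCM (powps_tr M) //.
case: ifP => hjk; first by rewrite mulr_algl.
by rewrite (cong0_pow j c0 k) ?coef0 ?mulr0 //; lia.
Qed.

Lemma kE_step i : kE i.+1 *+ i.+1 = kE i.
Proof.
rewrite /kE -[_ *+ i.+1]mulr_natr factS natrM invfM mulrAC mulVf ?mul1r //.
by rewrite pnatr_eq0.
Qed.

Lemma kL_step i : kL i.+1 *+ i.+1 = (-1) ^+ i.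
Proof.
by rewrite /kL /= -[_ *+ i.+1]mulr_natr divfK // pnatr_eq0.
Qed.

Lemma log_exp_K M :
  cong M (ExpG (fun i => (kL i)%:P) M (ExpG (fun j => (kE j)%:P) M 'X - 1) - 'X) 0.
Proof.
case: M => [|M']; first by [].
set M := M'.+1.
set e := ExpG (fun j => (kE j)%:P) M 'X.
have eE : e = \poly_(i < M) kE i.
  by rewrite poly_def /e /ExpG; apply: eq_bigr => j _; rewrite mul_polyC.
set y := e - 1.
have y0 : y`_0 = 0.
  by rewrite coefB eE coef_poly coef1 /= /kE fact0 invr1 subrr.
set L := ExpG _ M y.
set Sm := \sum_(i < M) (if i == 0%N :> nat then 0 else (-1) ^+ i.-1 * y ^+ i.-1).
have dL : L^`() = e^`() * Sm.
  rewrite /L /ExpG raddf_sum mulr_sumr; apply: eq_bigr => [[i hi]] _ /=.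
  have d1 : (1 : {poly K})^`() = 0 by rewrite -polyC1 derivC.
  rewrite derivM derivC mul0r add0r deriv_exp derivB d1 subr0.
  case: i hi => [|i] hi /=; first by rewrite mulr0n !mulr0.
  rewrite mulrnAr -mulrnAl -polyCMn kL_step rmorphXn rmorphN1 /=.
  ring.
have ce : cong M' (e^`()) e.
  move=> i hi; rewrite coef_deriv eE !coef_poly.
  have -> : (i.+1 < M)%N by rewrite /M; lia.
  have -> : (i < M)%N by rewrite /M; lia.
  exact: kE_step.
have eS : e * Sm = 1 - (-1) ^+ M' * y ^+ M'.
  by rewrite -(tele y M') /y addrC subrK.
have ch : cong M' (L - 'X)^`() 0.
  rewrite derivB derivX dL.
  apply: (cong_trans (q := e * Sm - 1)).
    exact: (cong_add (cong_mul ce cong_refl) cong_refl).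
  rewrite eS addrAC subrr add0r.
  move=> i hi; rewrite coefN.
  have hc := cong_mul (@cong_refl _ M' ((-1) ^+ M')) (cong0_pow M' y0).
  by rewrite (hc i hi) mulr0 !coef0 oppr0.
move=> k hk; case: k hk => [|k] hk.
  rewrite coefB coefX /= subr0 /L /ExpG coef_sum big1 ?coef0 // => [[j hj]] _.
  rewrite coefCM; case: j hj => [|j] hj /=; first by rewrite /kL /= mul0r.
  by rewrite (cong0_pow j.+1 y0 0) // coef0 mulr0.
have hk' : (k < M')%N by rewrite /M in hk; lia.
have := ch k hk'; rewrite coef_deriv coef0 => /eqP; rewrite mulrn_eq0 /= => /eqP ->.
by rewrite coef0.
Qed.

End KPart.
Arguments kE {K} j.
Arguments kL {K} i.

Lemma eq_ExpG (S : comNzRingType) (u u' : nat -> S) M x :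
  (forall j, u j = u' j) -> ExpG u M x = ExpG u' M x.
Proof. by move=> h; rewrite /ExpG; apply: eq_bigr => j _; rewrite h. Qed.

Section KPart2.
Variable K : numFieldType.

Lemma log_exp_B (B : comAlgType K) M (G : {poly B}) : G`_0 = 0 ->
  cong M (ExpG (vL K B) M (ExpG (uE K B) M G - 1)) G.
Proof.
move=> G0; rewrite /uE /vL.
pose phi : {rmorphism {poly K} -> {poly B}} :=
  horner_eval G \o map_poly ((@polyC B) \o in_alg B).
have phiC : forall c, phi c%:P = ((c%:A : B))%:P.
  by move=> c; rewrite /phi /= /horner_eval map_polyC hornerC.
have phiX : phi 'X = G by rewrite /phi /= /horner_eval map_polyX hornerX.
have hK := log_exp_K K M.
set h := _ - 'X in hK.
have eq1 : phi h = phi (drop_poly M h) * G ^+ M.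
  by rewrite {1}(cong_drop M h hK) rmorphM rmorphXn phiX.
have eq2 : phi h = ExpG (fun i => ((kL i)%:A : B)%:P) M
              (ExpG (fun j => ((kE j)%:A : B)%:P) M G - 1) - G.
  rewrite /h rmorphB rmorph_ExpG rmorphB rmorph_ExpG rmorph1 phiX.
  congr (_ - _); rewrite (eq_ExpG _ _ _ _ _ (fun i => phiC (kL i))).
  by congr ExpG; congr (_ - _); apply: eq_ExpG => j; exact: phiC.
move=> i hi; apply/eqP; rewrite -subr_eq0 -coefB -eq2 eq1.
have := cong_mul (@cong_refl _ M (phi (drop_poly M h))) (cong0_pow M G0) i hi.
by rewrite mulr0 coef0 => ->.
Qed.

Lemma lin_sum (U V : lmodType K) (f : {linear U -> V}) I r P (F : I -> U) :
  f (\sum_(i <- r | P i) F i) = \sum_(i <- r | P i) f (F i).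
Proof. exact: raddf_sum. Qed.

Lemma horner_map_lin (B C : comAlgType K) (f : {linear B -> C}) (p : {poly B}) (s : K) :
  (map_poly f p).[s%:A] = f p.[s%:A].
Proof.
rewrite (horner_coef_wide _ (size_poly _ _)) horner_coef lin_sum.
apply: eq_bigr => i _; rewrite coef_map_id0 ?raddf0 //.
by rewrite -(rmorphXn (in_alg C)) -(rmorphXn (in_alg B)) !mulr_algr linearZ_LR.
Qed.

Lemma poly_vanish (C : comAlgType K) (p : {poly C}) :
  (forall s : K, p.[s%:A] = 0) -> p = 0.
Proof.
move=> h.
suff H : forall d (p : {poly C}) c, (size p <= d)%N ->
    (forall i : nat, (c <= i)%N -> p.[(i%:R : K)%:A] = 0) -> p = 0.
  exact: (H (size p) p 0%N (leqnn _) (fun i _ => h _)).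
elim=> [|d IH] p0 c hs hv; first by apply/eqP; rewrite -size_poly_eq0 -leqn0.
have /factor_theorem [r hr] : root p0 ((c%:R : K)%:A) by apply/eqP; apply: hv.
case: (eqVneq r 0) => [r0|rn0]; first by rewrite hr r0 mul0r.
have hsr : (size r <= d)%N.
  by move: hs; rewrite hr size_Mmonic ?monicXsubC // size_XsubC addnS /= addn1 ltnS.
suff r0 : r = 0 by rewrite hr r0 mul0r.
apply: (IH r c.+1 hsr) => i hi.
have := hv i (ltnW hi); rewrite hr hornerM hornerXsubC.
have tn0 : (i%:R - c%:R : K) != 0 by rewrite subr_eq0 eqr_nat; lia.
rewrite -(raddfB (in_alg C)) /=.
move=> /(congr1 (fun z => z * ((i%:R - c%:R : K)^-1)%:A)).
by rewrite mul0r -mulrA -(rmorphM (in_alg C)) /= mulfV // scale1r mulr1.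
Qed.

End KPart2.

Definition bd (m i : nat) := ((i * m).+1 - i)%N.
Definition WD {C : nzSemiRingType} (m : nat) (p : {poly {poly C}}) :=
  forall i, (size (p`_i)%R <= bd m i)%N.

Lemma bd_mul m j k : (bd m j + bd m k <= (bd m (j + k)).+1)%N.
Proof.
rewrite /bd mulnDl.
have : (m = 0 /\ j * m = 0 /\ k * m = 0)%N \/ (j <= j * m /\ k <= k * m)%N.
  case: m => [|m']; first by left; rewrite !muln0.
  by right; split; apply: leq_pmulr.
move: (j * m)%N (k * m)%N => x y; lia.
Qed.

Section WDs.
Context {C : comNzRingType}.
Variable m : nat.

Lemma WD_mul (p q : {poly {poly C}}) : WD m p -> WD m q -> WD m (p * q).
Proof.
move=> hp hq i; rewrite coefM.
apply: (big_ind (fun x : {poly C} => size x <= bd m i)%N) => [|x y hx hy|[j hj] _ /=].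
- by rewrite size_poly0.
- by rewrite (leq_trans (size_add _ _)) // geq_max hx hy.
- apply: (leq_trans (size_mul_leq _ _)).
  have := bd_mul m j (i - j)%N; rewrite subnKC; last by lia.
  have := hp j; have := hq (i - j)%N.
  move: (size (p`_j)%R) (size (q`_(i - j))%R) (bd m j) (bd m (i - j)%N) (bd m i) => a b c d e; lia.
Qed.

Lemma WD_add (p q : {poly {poly C}}) : WD m p -> WD m q -> WD m (p + q).
Proof.
move=> hp hq i; rewrite coefD.
by rewrite (leq_trans (size_add _ _)) // geq_max hp hq.
Qed.

Lemma WD_C (c : {poly C}) : (size c <= 1)%N -> WD m c%:P.
Proof.
move=> hc [|i]; rewrite coefC /=; first by rewrite /bd mul0n.
by rewrite size_poly0.
Qed.

Lemma WD_exp (p : {poly {poly C}}) k : WD m p -> WD m (p ^+ k).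
Proof.
move=> hp; elim: k => [|k IH].
  by rewrite expr0 -polyC1; apply: WD_C; apply: size_polyC_leq1.
by rewrite exprS; apply: WD_mul.
Qed.

Lemma WD_ExpG (u : nat -> {poly {poly C}}) M (Y : {poly {poly C}}) :
  (forall j, WD m (u j)) -> WD m Y -> WD m (ExpG u M Y).
Proof.
move=> hu hY; rewrite /ExpG.
apply: (big_ind (WD m)) => [|x y hx hy|j _].
- by move=> i; rewrite coef0 size_poly0.
- exact: WD_add.
- by apply: WD_mul => //; apply: WD_exp.
Qed.
End WDs.

Lemma map_XnM (B C : nzSemiRingType) (f : B -> C) (f0 : f 0 = 0) i (p : {poly B}) :
  map_poly f ('X^i * p) = 'X^i * map_poly f p.
Proof.
apply/polyP => k; rewrite coef_map_id0 // !coefXnM; case: ifP => //.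
by rewrite coef_map_id0.
Qed.

Lemma size_map_leq (B C : nzSemiRingType) (f : B -> C) (p : {poly B}) :
  (size (map_poly f p) <= size p)%N.
Proof. exact: size_poly. Qed.

Section Main.
Variable K : numFieldType.

Lemma main_K (A B C : comAlgType K) m n (g : {linear A -> B}) (f : {linear B -> C}) :
  (forall a k, (m < k)%N -> charfun g a k = 0) ->
  (forall b k, (n < k)%N -> charfun f b k = 0) ->
  forall a N, (n * m < N)%N -> charfun (f \o g) a N = 0.
Proof.
move=> gv fv a N hN.
set M := (N + m).+1.
have hNM : (N < M)%N by rewrite /M; lia.
have g0 : g 0 = 0 := raddf0 g.
have f0 : f 0 = 0 := raddf0 f.
pose G := map_poly g (trs M (lnps a)).
have G0 : G`_0 = 0.
  by rewrite coef_map_id0 // coef_poly /= /lnps /= g0.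
pose P := trs M (charfun g a).
have hP : cong M P (ExpG (uE K B) M G).
  move=> k hk; rewrite coef_poly hk /charfun (expps_tr _ _ M _ k _ hk); last first.
    by rewrite /lnps /= g0.
  suff -> : trs M (fun k0 => g (lnps a k0)) = G by [].
  apply/polyP => i.
  by rewrite coef_map_id0 // !coef_poly; case: (i < M)%N; rewrite ?g0.
pose q := \poly_(i < m) charfun g a i.+1.
have Pq : P = 1 + 'X * q.
  apply/polyP => i; rewrite coefD coef1 coefXM !coef_poly.
  case: i => [|i] /=; first by rewrite addr0 /charfun expps0.
  rewrite add0r; case: (ltnP i m) => him.
    by have -> : (i.+1 < M)%N by rewrite /M; lia.
  by rewrite gv; [case: ifP | lia].
have e1 : 'X * q = P - 1 by rewrite Pq addrAC subrr add0r.
have hL : cong M (ExpG (vL K B) M ('X * q)) G.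
  apply: cong_trans (log_exp_B _ _ M G G0); rewrite e1.
  apply: cong_ExpG; exact: (cong_add hP cong_refl).
have hF : cong M (map_poly f G) (map_poly f (ExpG (vL K B) M ('X * q))).
  by move=> i hi; rewrite !coef_map_id0 // (hL i hi) coef_map_id0.
have step1 : charfun (f \o g) a N = (ExpG (uE K C) M (map_poly f G))`_N.
  rewrite /charfun (expps_tr _ _ M _ N _ hNM); last by rewrite /= /lnps /= g0 f0.
  suff -> : trs M (fun k0 => (f \o g) (lnps a k0)) = map_poly f G by [].
  apply/polyP => i.
  by rewrite !coef_map_id0 // !coef_poly; case: (i < M)%N; rewrite /= ?g0 ?f0.
have step2 := cong_ExpG M (uE K C) hF N hNM.
pose Y : {poly {poly C}} := \poly_(i < M) map_poly f (vL K B i * q ^+ i).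
have step3 : map_poly f (ExpG (vL K B) M ('X * q)) = Y.['X].
  rewrite (horner_coef_wide _ (size_poly _ _)) /ExpG raddf_sum.
  apply: eq_bigr => [[i hi]] _ /=.
  by rewrite coef_poly hi exprMn mulrCA map_XnM // mulrC.
pose uCC := fun j => (uE K C j)%:P.
pose E := ExpG uCC M Y.
have step4 : ExpG (uE K C) M (Y.['X]) = E.['X].
  rewrite /E; have h := rmorph_ExpG _ (horner_eval 'X) uCC M Y.
  rewrite -[RHS]/(horner_eval 'X (ExpG uCC M Y)) h.
  by apply: eq_ExpG => j; exact: (esym (hornerC _ _)).
have hE1 : forall i, (n < i)%N -> (i < M)%N -> E`_i = 0.
  move=> i hi1 hi2; apply: poly_vanish => s.
  pose b := q.[(s%:A : B)].
  have hm : map_poly (horner_eval (s%:A : C)) E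
            = ExpG (uE K C) M (trs M (fun k => f (lnps b k))).
    rewrite /E rmorph_ExpG (eq_ExpG _ _ (uE K C)); last first.
      by move=> j; rewrite /uCC /= map_polyC; congr polyC; exact: (hornerC _ _).
    apply: (congr1 (ExpG (uE K C) M)).
    apply/polyP => k; rewrite coef_map !coef_poly.
    case: ifP => hk /=; last by rewrite /horner_eval horner0.
    by rewrite /horner_eval horner_map_lin lnpsE /vL hornerCM horner_exp mulr_algl.
  have := congr1 (fun p : {poly C} => p`_i) hm; rewrite coef_map /= /horner_eval => ->.
  rewrite -(expps_tr _ _ M) //; first exact: fv.
have hWD : WD m E.
  apply: WD_ExpG => [j|].
    by apply: WD_C; apply: size_polyC_leq1.
  move=> i; rewrite coef_poly; case: ifP => _; last by rewrite size_poly0.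
  apply: leq_trans (size_map_leq _ _ _ _) _.
  apply: leq_trans (size_mul_leq _ _) _.
  have hv := size_polyC_leq1 ((kL i)%:A : B).
  have hq : (size q <= m)%N by apply: size_poly.
  have hqi : (size (q ^+ i) <= bd m i)%N.
    case: (posnP m) => [m0|mpos].
      have q0 : q = 0 by move: hq; rewrite m0 leqn0 size_poly_eq0 => /eqP.
      rewrite q0 /bd m0 muln0; clear hv; case: i => [|i].
        by rewrite expr0 size_poly1.
      by rewrite expr0n /= size_poly0.
    apply: leq_trans (size_exp_leq _ _) _.
    move: (size q) hq => sq hq.
    have h1 : (sq.-1 <= m.-1)%N by lia.
    have h2 : (sq.-1 * i <= m.-1 * i)%N by apply: leq_mul.
    have e : (i * m = m.-1 * i + i)%N.
      by rewrite -{1}(prednK mpos) mulnS mulnC addnC.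
    rewrite /bd e; move: (sq.-1 * i)%N (m.-1 * i)%N h2 => x y; lia.
  rewrite /vL; move: (size (((kL i)%:A : B)%:P)) (size (q ^+ i)) hv hqi => x y.
  move: (bd m i) => z; lia.
rewrite step1 step2 step3 step4.
rewrite horner_coef coef_sum big1 // => [[i hi]] _ /=.
rewrite coefMXn; case: ltnP => // hiN.
case: (ltnP n i) => hni.
  by rewrite hE1 ?coef0 //; rewrite /M; lia.
apply: nth_default.
apply: leq_trans (hWD i) _.
have : (i * m <= n * m)%N by apply: leq_mul.
rewrite /bd; move: (i * m)%N (n * m)%N hN => x y; lia.
Qed.
End Main.

Lemma nhom_comp (K : numFieldType) (A B C : comAlgType K) (m n : nat)
  (g : A -> B) (f : B -> C) : nhom m g -> nhom n f -> nhom (n * m) (f \o g).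
Proof.
move=> [glin [g1 gv]] [flin [f1 fv]].
pose lg := HB.pack_for {linear A -> B} g (GRing.isLinear.Build K A B *:%R g glin).
pose lf := HB.pack_for {linear B -> C} f (GRing.isLinear.Build K B C *:%R f flin).
split; [|split].
- by move=> c u v /=; rewrite glin flin.
- have h : f (1 *+ m) = f 1 *+ m := raddfMn lf m 1.
  by rewrite /= g1 h f1 natrM mulr_natr.
- exact: (@main_K K A B C m n lg lf gv fv).
Qed.

Theorem mainTheorem3 (R : realType) :
  (forall (A B C : comAlgType R) (m n : nat) (g : A -> B) (f : B -> C),
      nhom m g -> nhom n f -> nhom (n * m) (f \o g)) /\
  (forall (A B C : comAlgType R[i]) (m n : nat) (g : A -> B) (f : B -> C),
      nhom m g -> nhom n f -> nhom (n * m) (f \o g)).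
Proof.
split => A B C m n g f; exact: nhom_comp.
Qed.
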